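(* Let $k\in\mathbb C\setminus\mathbb Q$, $n,m\in\mathbb Z_{>0}$, $p_0=n+k^{-1}m$. Let $\alpha\in\mathcal P_{n,m}$ and let $E$ be its $\mathcal E$-equivalence class. Then: 1) $E\subset\mathcal P_{n,m}$. 2) $E$ contains a minimal bipartition $\alpha_m$ and a maximal bipartition $\alpha_M$ such that $\alpha_m\subset\beta\subset\alpha_M$ for every $\beta\in E$. They are characterised within $E$ by the properties $\lambda\cap\theta(\mu)=\emptyset$ (for $\alpha_m=(\lambda,\mu)$) and $\lambda\cup\theta(\mu)=\pi(n,m)$ (for $\alpha_M=(\lambda,\mu)$), respectively. 3) Write $\alpha_m=(\lambda_m,\mu_m)$, $\alpha_M=(\lambda_M,\mu_M)$ and let $\lambda_M\setminus\lambda_m=\nu_1\cup\dots\cup\nu_r$ and $\mu_M\setminus\mu_m=\tau_1\cup\dots\cup\tau_s$ be the decompositions of these skew diagrams into connected components. Then all $\nu_i,\tau_j\subset\pi(n,m)$, $r=s$, and after a reordering $\theta(\nu_i)=\tau_i$ for $i=1,\dots,r$. 4) Every element $\beta\in E$ can be written uniquely in the form $\beta=\alpha_m\cup(\nu_{a_1},\tau_{a_1})\cup\dots\cup(\nu_{a_l},\tau_{a_l})$ with $\{a_1,\dots,a_l\}\subset\{1,\dots,r\}$; conversely every set of this form is a bipartition belonging to $E$. In particular $E$ has exactly $2^r$ elements.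
   Context: Partitions are identified with Young diagrams, i.e. finite sets of boxes $(i,j)\in\mathbb Z_{>0}^2$ ($i$ = row, $j$ = column) closed under moving up or left; a bipartition is a pair $(\lambda,\mu)$ of partitions, with inclusion and set operations (union, intersection, difference) taken componentwise. Connected components of a set of boxes are taken with respect to boxes sharing an edge. For a box $x=(i,j)$, $c(x,a)=(j-1)+k(i-1)+a$, and $b_r(\alpha,k,p_0)=\sum_{x\in\lambda}c(x,0)^{r-1}+(-1)^r\sum_{y\in\mu}c(y,1+k-kp_0)^{r-1}$ for $r\ge1$. Bipartitions are $\mathcal E$-equivalent if all their $b_r$, $r\ge1$, coincide. $\pi(n,m)=\{(i,j):1\le i\le n,1\le j\le m\}$, $\theta(i,j)=(n-i+1,m-j+1)$ on $\pi(n,m)$, and $\mathcal P_{n,m}$ is the set of bipartitions $(\lambda,\mu)$ with $\lambda,\mu\subset\pi(n,m)$. *)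

(* Defs.v *)
From HB Require Import structures.
From mathcomp Require Import all_boot all_order all_algebra.
From mathcomp Require Import finmap.
From mathcomp Require Import complex.
From mathcomp Require Import reals.
Set Implicit Arguments. Unset Strict Implicit. Unset Printing Implicit Defensive.
Import Order.TTheory GRing.Theory Num.Theory.
Local Open Scope fset_scope.

(* A box (i,j) : i = row, j = column, both >= 1. *)
Definition box := (nat * nat)%type.
Definition boxes := {fset box}.

Definition is_partition (l : boxes) : Prop :=
  forall x : box, x \in l ->
    [/\ (0 < x.1)%N, (0 < x.2)%N,
        (1 < x.1)%N -> (x.1.-1, x.2) \in l
      & (1 < x.2)%N -> (x.1, x.2.-1) \in l].

Definition bipart := (boxes * boxes)%type.

Definition is_bipartition (a : bipart) : Prop :=
  is_partition a.1 /\ is_partition a.2.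

Definition bsubset (a b : bipart) : bool := (a.1 `<=` b.1) && (a.2 `<=` b.2).
Definition bunion (a b : bipart) : bipart := (a.1 `|` b.1, a.2 `|` b.2).

Definition in_pi (n m : nat) (x : box) : bool :=
  [&& (1 <= x.1 <= n)%N & (1 <= x.2 <= m)%N].
Definition pi_nm (n m : nat) : boxes :=
  [fset x in [seq (i, j) | i <- iota 1 n, j <- iota 1 m]].

Definition theta (n m : nat) (x : box) : box := (n - x.1 + 1, m - x.2 + 1)%N.
Definition theta_set (n m : nat) (A : boxes) : boxes := [fset theta n m x | x in A].

Definition in_Pnm (n m : nat) (a : bipart) : Prop :=
  is_bipartition a /\ a.1 `<=` pi_nm n m /\ a.2 `<=` pi_nm n m.

Section Content.
Variable (R : realType).
Local Open Scope ring_scope.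

Definition cont (k : complex R) (x : box) (a : complex R) : complex R :=
  (x.2.-1)%:R + k * (x.1.-1)%:R + a.

Definition bpow (r : nat) (alpha : bipart) (k p0 : complex R) : complex R :=
  \sum_(x <- alpha.1) cont k x 0 ^+ r.-1
  + (-1) ^+ r * \sum_(y <- alpha.2) cont k y (1 + k - k * p0) ^+ r.-1.

Definition Eequiv (k p0 : complex R) (alpha beta : bipart) : Prop :=
  forall r : nat, (0 < r)%N -> bpow r alpha k p0 = bpow r beta k p0.
End Content.

Definition adj (x y : box) : bool :=
  ((x.1 == y.1) && ((x.2 == y.2.+1) || (y.2 == x.2.+1))) ||
  ((x.2 == y.2) && ((x.1 == y.1.+1) || (y.1 == x.1.+1))).

Definition is_component (S C : boxes) : Prop :=
  [/\ C `<=` S, C != fset0,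
      (forall x y, x \in C -> y \in C ->
         exists p : seq box, [&& path adj x p, last x p == y & all (fun z => z \in C) p])
    & (forall x y, x \in C -> y \in S -> adj x y -> y \in C)].

Definition famU (r : nat) (F : 'I_r -> boxes) (A : {set 'I_r}) : boxes :=
  \bigcup_(i <- enum A) F i.

(* Main.v *)
Require Import Defs.
From HB Require Import structures.
From mathcomp Require Import all_boot all_order all_algebra.
From mathcomp Require Import finmap complex reals boolp.
From mathcomp Require Import zify ring.
Import GRing.Theory Num.Theory.
Local Open Scope fset_scope.
Set Implicit Arguments. Unset Strict Implicit.

Lemma adjC x y : adj x y = adj y x.
Proof. rewrite /adj; case: x => a b; case: y => c d /=; apply/idP/idP; lia. Qed.

Inductive reach (S : {fset box}) (x : box) : box -> Prop :=
| reach0 : reach S x x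
| reachS y z : reach S x y -> z \in S -> adj y z -> reach S x z.

Lemma reach_in S x y : reach S x y -> x \in S -> y \in S.
Proof. by elim => // y0 z _ _ zS _. Qed.

Lemma reach_trans S x y z : reach S x y -> reach S y z -> reach S x z.
Proof. move=> h1; elim => // a b _ IH bS ab; exact: reachS IH bS ab. Qed.

Lemma reach_sym S x y : x \in S -> reach S x y -> reach S y x.
Proof.
move=> xS; elim => [|a b hxa IH bS ab]; first exact: reach0.
apply: reach_trans IH; apply: reachS (reach0 _ _) _ _.
  exact: reach_in hxa xS.
by rewrite adjC.
Qed.

Lemma reach_path S x y : reach S x y -> exists p : seq box,
  [&& path adj x p, last x p == y & all (fun z => (z \in S) && `[< reach S x z >]) p].
Proof.
elim => [|a b hxa [p /and3P[hp /eqP hl ha]] bS ab]; first by exists [::]; rewrite /= eqxx.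
exists (rcons p b); rewrite rcons_path last_rcons all_rcons hp hl ab ha bS /=.
by rewrite eqxx andbT; apply/asboolP; exact: reachS hxa bS ab.
Qed.

Lemma reach_induct S (Q : box -> Prop) x y : reach S x y -> Q x ->
  (forall a b, Q a -> b \in S -> adj a b -> Q b) -> Q y.
Proof. move=> h qx hQ; elim: h => // a b _ qa bS ab; exact: hQ qa bS ab. Qed.

Definition comp (S : {fset box}) (x : box) : {fset box} :=
  [fset y in S | `[< reach S x y >]].

Lemma in_comp S x y : (y \in comp S x) = (y \in S) && `[< reach S x y >].
Proof. by rewrite !inE. Qed.

Lemma comp_is_component S x : x \in S -> is_component S (comp S x).
Proof.
move=> xS; split.
- by apply/fsubsetP => y; rewrite in_comp => /andP[].
- apply/eqP => e; have : x \in comp S x.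
    by rewrite in_comp xS; apply/asboolP; exact: reach0.
  by rewrite e inE.
- move=> y1 y2; rewrite !in_comp => /andP[y1S /asboolP h1] /andP[y2S /asboolP h2].
  have h12 : reach S y1 y2 by apply: reach_trans (reach_sym xS h1) h2.
  have [p /and3P[hp hl ha]] := reach_path h12.
  exists p; rewrite hp hl /=; apply: sub_all ha => z /andP[zS /asboolP hz].
  by rewrite in_comp zS; apply/asboolP; exact: reach_trans h1 hz.
- move=> y z; rewrite !in_comp => /andP[yS /asboolP hy] zS yz.
  by rewrite zS; apply/asboolP; exact: reachS hy zS yz.
Qed.

Lemma comp_closed_path S C x p : is_component S C -> x \in C ->
  path adj x p -> all (fun z => z \in S) p -> last x p \in C.
Proof.
case=> _ _ _ hcl; elim: p x => [|a p IH] x //= xC /andP[xa hp] /andP[aS hS].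
by apply: IH hp hS; exact: hcl xa.
Qed.

Lemma comp_sub S C1 C2 x : is_component S C1 -> is_component S C2 ->
  x \in C1 -> x \in C2 -> C1 `<=` C2.
Proof.
move=> h1 h2 x1 x2; apply/fsubsetP => y y1.
case: (h1) => sub1 _ hc _.
have [p /and3P[hp /eqP hl ha]] := hc x y x1 y1.
rewrite -hl; apply: comp_closed_path h2 x2 hp _.
by apply: sub_all ha => z; apply: (fsubsetP sub1).
Qed.

Lemma comp_eq S C1 C2 x : is_component S C1 -> is_component S C2 ->
  x \in C1 -> x \in C2 -> C1 = C2.
Proof.
move=> h1 h2 x1 x2; apply/eqP; rewrite eqEfsubset.
by rewrite (comp_sub h1 h2 x1 x2) (comp_sub h2 h1 x2 x1).
Qed.

Definition compset (S : {fset box}) : {fset {fset box}} := [fset comp S x | x in S].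

Lemma compset_spec S C : is_component S C <-> C \in compset S.
Proof.
split => [hC|].
  case: (hC) => sub ne _ _; have [x xC] := fset0Pn _ ne.
  have xS : x \in S by apply: (fsubsetP sub).
  have -> : C = comp S x.
    apply: comp_eq hC (comp_is_component xS) xC _.
    by rewrite in_comp xS; apply/asboolP; exact: reach0.
  by apply/imfsetP; exists x.
by case/imfsetP => x /= xS ->; exact: comp_is_component.
Qed.
Section Combi.
Variables n m : nat.

Lemma in_piE x : (x \in pi_nm n m) = in_pi n m x.
Proof.
case: x => i j; rewrite /pi_nm /in_pi inE /=.
apply/allpairsP/idP => [[[a b] /= [ha hb [-> ->]]]|/andP[hi hj]].
  by move: ha hb; rewrite !mem_iota; lia.
exists (i, j) => /=; rewrite !mem_iota; split => //; lia.
Qed.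

Lemma theta_pi x : x \in pi_nm n m -> theta n m x \in pi_nm n m.
Proof. by rewrite !in_piE /in_pi /theta /=; case: x => i j /=; lia. Qed.

Lemma thetaK x : x \in pi_nm n m -> theta n m (theta n m x) = x.
Proof.
rewrite in_piE /in_pi /theta; case: x => i j /= h.
congr pair; lia.
Qed.

Lemma adj_theta x y : x \in pi_nm n m -> y \in pi_nm n m ->
  adj (theta n m x) (theta n m y) = adj x y.
Proof.
rewrite !in_piE /in_pi /theta /adj; case: x => a b; case: y => c d /= h1 h2.
apply/idP/idP; lia.
Qed.


Lemma mem_theta_set A x : A `<=` pi_nm n m -> x \in pi_nm n m ->
  (x \in theta_set n m A) = (theta n m x \in A).
Proof.
move=> sA xp; apply/imfsetP/idP => [[a /= aA ->]|h].
  by rewrite thetaK //; apply: (fsubsetP sA).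
by exists (theta n m x); rewrite // thetaK.
Qed.

Lemma theta_set_sub A : A `<=` pi_nm n m -> theta_set n m A `<=` pi_nm n m.
Proof.
move=> sA; apply/fsubsetP => y /imfsetP[x /= xA ->].
by apply: theta_pi; apply: (fsubsetP sA).
Qed.

Lemma theta_setK A : A `<=` pi_nm n m -> theta_set n m (theta_set n m A) = A.
Proof.
move=> sA; apply/fsetP => x; apply/imfsetP/idP => [[y /= /imfsetP[z /= zA ->] ->]|xA].
  by rewrite thetaK //; apply: (fsubsetP sA).
exists (theta n m x); last by rewrite thetaK //; apply: (fsubsetP sA).
by apply/imfsetP; exists x.
Qed.

Lemma theta_path x p : x \in pi_nm n m -> all (fun z => z \in pi_nm n m) p ->
  path adj x p -> path adj (theta n m x) (map (theta n m) p).
Proof.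
elim: p x => [|a p IH] x //= xp /andP[ap hp] /andP[xa pa].
by rewrite adj_theta // xa /=; apply: IH.
Qed.

Lemma theta_component S C : S `<=` pi_nm n m -> is_component S C ->
  is_component (theta_set n m S) (theta_set n m C).
Proof.
move=> sS [sub ne hc hcl].
have sC : C `<=` pi_nm n m by apply: fsubset_trans sS.
split.
- by apply/fsubsetP => y /imfsetP[x /= xC ->]; apply/imfsetP; exists x => //; apply: (fsubsetP sub).
- have [x xC] := fset0Pn _ ne; apply/fset0Pn; exists (theta n m x).
  by apply/imfsetP; exists x.
- move=> x' y' /imfsetP[x /= xC ->] /imfsetP[y /= yC ->].
  have [p /and3P[hp /eqP hl ha]] := hc x y xC yC.
  exists (map (theta n m) p); rewrite theta_path //; last first.
  + by apply: sub_all ha => z; apply: (fsubsetP sC).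
  + by apply: (fsubsetP sC).
  rewrite last_map hl eqxx /= all_map; apply: sub_all ha => z zC /=.
  by apply/imfsetP; exists z.
- move=> x' y' /imfsetP[x /= xC ->] /imfsetP[y /= yS ->].
  rewrite adj_theta; last 2 first.
  + by apply: (fsubsetP sC).
  + by apply: (fsubsetP sS).
  by move=> xy; apply/imfsetP; exists y => //; exact: hcl xy.
Qed.

End Combi.

Lemma theta_bigcup n m (I : Type) (s : seq I) (F : I -> {fset box}) :
  theta_set n m (\bigcup_(i <- s) F i) = \bigcup_(i <- s) theta_set n m (F i).
Proof.
elim: s => [|a s IH]; first by rewrite !big_nil /theta_set imfset0.
by rewrite !big_cons /theta_set imfsetU -IH.
Qed.
Section PS.
Local Open Scope ring_scope.
Variable F : numFieldType.

Lemma powsum_count (s t : seq F) :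
  (forall i, \sum_(z <- s) z ^+ i = \sum_(z <- t) z ^+ i) ->
  forall z0, count_mem z0 s = count_mem z0 t.
Proof.
move=> hst z0.
pose u := undup (s ++ t).
pose L := \prod_(z <- u | z != z0) ('X - z%:P).
have key v : all (fun z => z \in u) v ->
    \sum_(z <- v) L.[z] = (count_mem z0 v)%:R * L.[z0].
  elim: v => [|a v IH] /=; first by rewrite big_nil mul0r.
  case/andP => au hv; rewrite big_cons IH // natrD mulrDl.
  congr (_ + _); case: eqP => [->|/eqP na]; first by rewrite mul1r.
  rewrite mul0r; apply/eqP; rewrite /L horner_prod prodf_seq_eq0.
  apply/hasP; exists a => //; rewrite na /=.
  by rewrite hornerD hornerN hornerX hornerC subrr.
have hsum v : \sum_(z <- v) L.[z] = \sum_(j < size L) L`_j * \sum_(z <- v) z ^+ j.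
  under eq_bigr do rewrite horner_coef.
  rewrite exchange_big /=; apply: eq_bigr => j _.
  by rewrite mulr_sumr.
have hs : all (fun z => z \in u) s by apply/allP => z zs; rewrite mem_undup mem_cat zs.
have ht : all (fun z => z \in u) t by apply/allP => z zt; rewrite mem_undup mem_cat zt orbT.
have e : (count_mem z0 s)%:R * L.[z0] = (count_mem z0 t)%:R * L.[z0] :> F.
  rewrite -key // -key // !hsum; apply: eq_bigr => j _; by rewrite hst.
have nz : L.[z0] != 0.
  rewrite /L horner_prod prodf_seq_neq0; apply/allP => z _.
  apply/implyP => nz; rewrite hornerD hornerN hornerX hornerC subr_eq0.
  by rewrite eq_sym.
by apply/eqP; rewrite -(eqr_nat F) (mulIf nz e).
Qed.
End PS.
Section Analytic.
Local Open Scope ring_scope.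
Variable R : realType.
Variable k : complex R.
Hypothesis hk : forall q : rat, k != ratr q.
Variables n m : nat.

Definition W (a b : int) : complex R := a%:~R + k * b%:~R.

Lemma k_neq0 : k != 0.
Proof. by have := hk 0; rewrite rmorph0. Qed.

Lemma W_inj a b a' b' : W a b = W a' b' -> a = a' /\ b = b'.
Proof.
rewrite /W => e.
have e2 : (a - a')%:~R = k * (b' - b)%:~R :> complex R.
  transitivity (a%:~R + k * b%:~R - a'%:~R - k * b%:~R : complex R).
    by rewrite !intrB; ring.
  by rewrite e !intrB; ring.
have [hb|hb] := eqVneq (b' - b) 0.
  move: e2; rewrite hb mulr0 => /eqP; rewrite intr_eq0 subr_eq0 => /eqP ->.
  by split => //; apply/eqP; rewrite eq_sym -subr_eq0 hb.
have := hk ((a - a')%:~R / (b' - b)%:~R).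
rewrite fmorph_div !rmorph_int e2 mulfK ?eqxx //.
by rewrite intr_eq0.
Qed.

Definition c1 (x : box) : complex R := cont k x 0.
Definition c2 (y : box) : complex R := W (m%:Z - y.2%:Z) (n%:Z - y.1%:Z).

Lemma c1E x : c1 x = W (x.2.-1)%:Z (x.1.-1)%:Z.
Proof. by rewrite /c1 /cont /W addr0. Qed.

Lemma c2E y : (0 < y.1)%N -> (0 < y.2)%N ->
  cont k y (1 + k - k * (n%:R + k^-1 * m%:R)) = - c2 y.
Proof.
move=> h1 h2; rewrite /c2 /W /cont !intrB /=.
have e1 : (y.1%:R : complex R) = (y.1.-1)%:R + 1 by rewrite natr1 prednK.
have e2 : (y.2%:R : complex R) = (y.2.-1)%:R + 1 by rewrite natr1 prednK.
rewrite -!pmulrn e1 e2 mulrDr mulrA mulfV ?k_neq0 // mul1r; ring.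
Qed.


Definition pos (x : box) := (0 < x.1)%N && (0 < x.2)%N.

Lemma c1_inj x x' : pos x -> pos x' -> c1 x = c1 x' -> x = x'.
Proof.
rewrite !c1E /pos => h h' /W_inj[[e1] [e2]].
by case: x h e1 e2 => a b; case: x' h' => c d /= h' h e1 e2; congr pair; lia.
Qed.

Lemma c2_inj y y' : c2 y = c2 y' -> y = y'.
Proof.
rewrite /c2 => /W_inj[e1 e2].
by case: y e1 e2 => a b; case: y' => c d /= e1 e2; congr pair; lia.
Qed.

Lemma c12 x y : pos x -> pos y ->
  (c1 x == c2 y) = (x \in pi_nm n m) && (y == theta n m x).
Proof.
rewrite c1E /c2 in_piE /in_pi /theta /pos.
case: x => a b; case: y => c d /= h h'.
apply/eqP/andP => [/W_inj[e1 e2]|[h1 /eqP[-> ->]]].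
  by split; [lia | apply/eqP; congr pair; lia].
by congr W; lia.
Qed.

Lemma pi_theta_sym x y : pos x -> pos y ->
  (x \in pi_nm n m) && (y == theta n m x) = (y \in pi_nm n m) && (x == theta n m y).
Proof.
rewrite !in_piE /in_pi /theta /pos.
case: x => a b; case: y => c d /= h h'; rewrite !xpair_eqE.
apply/idP/idP; lia.
Qed.

Lemma cnt11 (L : {fset box}) x : {in L, forall y, pos y} -> pos x ->
  count_mem (c1 x) (map c1 L) = (x \in L).
Proof.
move=> hL hx; rewrite count_map -(count_uniq_mem _ (fset_uniq L)).
apply: eq_in_count => y yL /=; apply/eqP/eqP => [|->] //.
by apply: c1_inj => //; apply: hL.
Qed.

Lemma cnt22 (M : {fset box}) y :
  count_mem (c2 y) (map c2 M) = (y \in M).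
Proof.
rewrite count_map -(count_uniq_mem _ (fset_uniq M)).
by apply: eq_in_count => z zM /=; apply/eqP/eqP => [/c2_inj|->].
Qed.

Lemma cnt12 (M : {fset box}) x : {in M, forall y, pos y} -> pos x ->
  count_mem (c1 x) (map c2 M) = (x \in pi_nm n m) && (theta n m x \in M).
Proof.
move=> hM hx; rewrite count_map.
case: (boolP (x \in pi_nm n m)) => xp /=.
  rewrite -(count_uniq_mem _ (fset_uniq M)).
  apply: eq_in_count => y yM /=.
  by rewrite eq_sym c12 // ?xp //; apply: hM.
rewrite (@eq_in_count _ _ pred0) ?count_pred0 // => y yM /=.
by rewrite eq_sym c12 ?(negbTE xp) //; apply: hM.
Qed.

Lemma cnt21 (L : {fset box}) y : {in L, forall y, pos y} -> pos y ->
  count_mem (c2 y) (map c1 L) = (y \in pi_nm n m) && (theta n m y \in L).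
Proof.
move=> hL hy; rewrite count_map.
case: (boolP (y \in pi_nm n m)) => yp /=.
  rewrite -(count_uniq_mem _ (fset_uniq L)).
  apply: eq_in_count => x xL /=.
  by have px := hL x xL; rewrite c12 // pi_theta_sym // yp.
rewrite (@eq_in_count _ _ pred0) ?count_pred0 // => x xL /=.
by have px := hL x xL; rewrite c12 // pi_theta_sym // (negbTE yp).
Qed.

Lemma sgn_pow (z : complex R) i : (-1) ^+ i.+1 * (- z) ^+ i = - z ^+ i.
Proof.
by rewrite exprS (exprNn z) mulN1r mulNr mulrA -exprMn mulrNN mulr1 expr1n mul1r.
Qed.

Lemma bpowE (b : bipart) i : {in b.2, forall y, pos y} ->
  bpow i.+1 b k (n%:R + k^-1 * m%:R) =
  \sum_(x <- b.1) c1 x ^+ i - \sum_(y <- b.2) c2 y ^+ i.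
Proof.
move=> hb; rewrite /bpow /=; congr (_ + _).
rewrite mulr_sumr -sumrN; apply: eq_big_seq => y yM.
by case/andP: (hb y yM) => h1 h2; rewrite c2E // sgn_pow.
Qed.

End Analytic.

Lemma in_sep (A : {fset box}) (P : pred box) x :
  (x \in [fset y in A | P y]) = (x \in A) && P x.
Proof. by rewrite !inE. Qed.

Lemma sub_swap (F : zmodType) (a b c d : F) : (a - b = c - d -> a + d = c + b)%R.
Proof. move=> e; have -> : a = (c - d + b)%R by rewrite -e subrK. by rewrite addrAC subrK. Qed.

Lemma sub_swap' (F : zmodType) (a b c d : F) : (a + d = c + b -> a - b = c - d)%R.
Proof. by move=> e; apply/eqP; rewrite subr_eq addrAC -e addrK. Qed.

Lemma part_pos L x : is_partition L -> x \in L -> pos x.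
Proof. by move=> hL xL; case: (hL x xL) => h1 h2 _ _; rewrite /pos h1 h2. Qed.

Lemma L_up L i j : is_partition L -> (i, j) \in L -> (1 < i)%N -> (i.-1, j) \in L.
Proof. by move=> hL xL; case: (hL _ xL). Qed.

Lemma L_left L i j : is_partition L -> (i, j) \in L -> (1 < j)%N -> (i, j.-1) \in L.
Proof. by move=> hL xL; case: (hL _ xL). Qed.

Section Nbr.
Variables n m : nat.

Lemma M_down M i j : is_partition M -> (i, j) \in pi_nm n m ->
  theta n m (i, j) \in M -> (i < n)%N -> theta n m (i.+1, j) \in M.
Proof.
move=> hM; rewrite in_piE /in_pi /theta /= => hp h hi.
have := L_up hM h; rewrite (_ : (n - i + 1).-1 = n - i.+1 + 1)%N; last by lia.
by apply; lia.
Qed.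

Lemma M_right M i j : is_partition M -> (i, j) \in pi_nm n m ->
  theta n m (i, j) \in M -> (j < m)%N -> theta n m (i, j.+1) \in M.
Proof.
move=> hM; rewrite in_piE /in_pi /theta /= => hp h hj.
have := L_left hM h; rewrite (_ : (m - j + 1).-1 = m - j.+1 + 1)%N; last by lia.
by apply; lia.
Qed.

Lemma part_f (A B : {fset box}) (f : bool -> bool -> bool) :
  is_partition A -> is_partition B ->
  (forall l l' u u' : bool, (l -> l') -> (u' -> u) -> f l u -> f l' u') ->
  is_partition [fset x in pi_nm n m | f (x \in A) (theta n m x \in B)].
Proof.
move=> hA hB hf [i j]; rewrite in_sep => /andP[hp hx].
have hp' := hp; rewrite in_piE /in_pi /= in hp'.
split => /=; try lia.
- move=> hi; rewrite in_sep; apply/andP; split.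
    by rewrite in_piE /in_pi /=; lia.
  apply: hf hx; first by move=> h; apply: L_up.
  move=> h; have := M_down hB _ h; rewrite prednK; last by lia.
  apply; last by lia.
  by rewrite in_piE /in_pi /=; lia.
- move=> hj; rewrite in_sep; apply/andP; split.
    by rewrite in_piE /in_pi /=; lia.
  apply: hf hx; first by move=> h; apply: L_left.
  move=> h; have := M_right hB _ h; rewrite prednK; last by lia.
  apply; last by lia.
  by rewrite in_piE /in_pi /=; lia.
Qed.

Lemma part_U (Lm LM D O : {fset box}) :
  is_partition Lm -> is_partition LM -> (forall x, x \in LM -> (x \in Lm) || (x \in D)) ->
  O `<=` LM -> (forall x y, x \in O -> y \in D -> adj x y -> y \in O) ->
  is_partition (Lm `|` O).
Proof.
move=> hm hM hMD sO hcl [i j]; rewrite in_fsetU => /orP[xm|xO].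
  case: (hm _ xm) => h1 h2 h3 h4; split => // [h|h]; rewrite in_fsetU.
    by rewrite (h3 h).
  by rewrite (h4 h).
have xM := fsubsetP sO _ xO.
case: (hM _ xM) => /= h1 h2 h3 h4; split => // h.
  have := hMD _ (h3 h); rewrite in_fsetU; case/orP => [->//|yD].
  by rewrite (hcl _ _ xO yD) ?orbT //; rewrite /adj /=; lia.
have := hMD _ (h4 h); rewrite in_fsetU; case/orP => [->//|yD].
by rewrite (hcl _ _ xO yD) ?orbT //; rewrite /adj /=; lia.
Qed.

End Nbr.

Section Main.
Variable R : realType.
Variable k : complex R.
Hypothesis hk : forall q : rat, k != ratr q.
Variables n m : nat.
Hypotheses (hn : (0 < n)%N) (hm : (0 < m)%N).
Variable alpha : bipart.
Hypothesis halpha : in_Pnm n m alpha.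

Definition Ebip (b : bipart) :=
  is_bipartition b /\ Eequiv k (n%:R + k^-1 * m%:R)%R alpha b.

Definition Good (b : bipart) := in_Pnm n m b /\ forall x, x \in pi_nm n m ->
  ((x \in alpha.1) + (theta n m x \in b.2) = (x \in b.1) + (theta n m x \in alpha.2))%N.

Lemma pi_pos x : x \in pi_nm n m -> pos x.
Proof. by rewrite in_piE /in_pi /pos; lia. Qed.

Lemma cnt_c1 (L M : {fset box}) x : is_partition L -> is_partition M -> pos x ->
  count_mem (c1 k x) (map (c1 k) L ++ map (c2 k n m) M) =
  ((x \in L) + ((x \in pi_nm n m) && (theta n m x \in M)))%N.
Proof.
move=> hL hM hx; rewrite count_cat cnt11 ?(cnt12 hk) // => y; exact: part_pos.
Qed.

Lemma cnt_c2 (L M : {fset box}) y : is_partition L -> is_partition M -> pos y ->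
  count_mem (c2 k n m y) (map (c1 k) L ++ map (c2 k n m) M) =
  (((y \in pi_nm n m) && (theta n m y \in L)) + (y \in M))%N.
Proof.
move=> hL hM hy; rewrite count_cat; congr addn; [apply: (cnt21 hk) => // z; exact: part_pos | exact: (cnt22 hk)].
Qed.

Lemma E_Good b : Ebip b <-> Good b.
Proof.
case: halpha => [[ha1 ha2] [sa1 sa2]].
have pa1 : {in alpha.1, forall y, pos y} by move=> y hy; exact: part_pos ha1 hy.
have pa2 : {in alpha.2, forall y, pos y} by move=> y hy; exact: part_pos ha2 hy.
split => [[[hb1 hb2] he]|[[[hb1 hb2] [sb1 sb2]] hg]].
  have pb2 : {in b.2, forall y, pos y} by move=> y hy; exact: part_pos hb2 hy.
  have hcnt z : count_mem z (map (c1 k) alpha.1 ++ map (c2 k n m) b.2) =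
                count_mem z (map (c1 k) b.1 ++ map (c2 k n m) alpha.2).
    apply: powsum_count => i; rewrite !big_cat !big_map /=.
    apply: sub_swap; have := he i.+1 (ltn0Sn i).
    by rewrite !bpowE.
  have sb1 : b.1 `<=` pi_nm n m.
    apply/fsubsetP => x xb; have px := part_pos hb1 xb.
    have := hcnt (c1 k x); rewrite !cnt_c1 // xb.
    case: (boolP (x \in pi_nm n m)) => // xn /=.
    case: (boolP (x \in alpha.1)) => [xa|] //.
    by rewrite (fsubsetP sa1 _ xa) in xn.
  have sb2 : b.2 `<=` pi_nm n m.
    apply/fsubsetP => y yb; have py := part_pos hb2 yb.
    have := hcnt (c2 k n m y); rewrite !cnt_c2 // yb.
    case: (boolP (y \in pi_nm n m)) => // yn /=.
    rewrite addn1 add0n.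
    case: (boolP (y \in alpha.2)) => [ya|] //.
    by rewrite (fsubsetP sa2 _ ya) in yn.
  split; first by [].
  move=> x xp; have px := pi_pos xp.
  by have := hcnt (c1 k x); rewrite !cnt_c1 // xp.
split => //.
have pb2 : {in b.2, forall y, pos y} by move=> y hy; exact: part_pos hb2 hy.
move=> [//|i] _; rewrite !bpowE //.
apply: sub_swap'.
have hp : perm_eq (map (c1 k) alpha.1 ++ map (c2 k n m) b.2)
                  (map (c1 k) b.1 ++ map (c2 k n m) alpha.2).
  rewrite /perm_eq; apply/allP => z zin; apply/eqP.
  have [x xp ->] : exists2 x, x \in pi_nm n m & z = c1 k x.
    move: zin; rewrite !mem_cat => /orP[/orP[]|/orP[]] /mapP[y yin ->].
    - by exists y => //; apply: (fsubsetP sa1).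
    - have yp : y \in pi_nm n m by apply: (fsubsetP sb2).
      exists (theta n m y); first exact: theta_pi.
      have q1 := pi_pos (theta_pi yp); have q2 := pi_pos yp.
      by apply/esym/eqP; rewrite (c12 hk) // theta_pi // thetaK // eqxx.
    - by exists y => //; apply: (fsubsetP sb1).
    - have yp : y \in pi_nm n m by apply: (fsubsetP sa2).
      exists (theta n m y); first exact: theta_pi.
      have q1 := pi_pos (theta_pi yp); have q2 := pi_pos yp.
      by apply/esym/eqP; rewrite (c12 hk) // theta_pi // thetaK // eqxx.
  by rewrite !cnt_c1 ?pi_pos // xp /= hg.
have e : (\sum_(z <- map (c1 k) alpha.1 ++ map (c2 k n m) b.2) z ^+ i =
          \sum_(z <- map (c1 k) b.1 ++ map (c2 k n m) alpha.2) z ^+ i)%R.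
  exact: perm_big.
by move: e; rewrite !big_cat !big_map.
Qed.


Lemma mono_and (l l' u u' : bool) : (l -> l') -> (u' -> u) -> l && ~~ u -> l' && ~~ u'.
Proof. by case: l; case: l'; case: u; case: u' => //= h1 h2; try by case: (h1 isT); try by case: (h2 isT). Qed.
Lemma mono_or (l l' u u' : bool) : (l -> l') -> (u' -> u) -> l || ~~ u -> l' || ~~ u'.
Proof. by case: l; case: l'; case: u; case: u' => //= h1 h2; try by case: (h1 isT); try by case: (h2 isT). Qed.

Ltac bcase := repeat match goal with |- context[?x \in ?A] => case: (x \in A) end.

Local Notation th := (theta n m).
Local Notation PI := (pi_nm n m).

Definition lam_m := [fset x in PI | (x \in alpha.1) && (th x \notin alpha.2)].
Definition mu_m := [fset x in PI | (x \in alpha.2) && (th x \notin alpha.1)].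
Definition lam_M := [fset x in PI | (x \in alpha.1) || (th x \notin alpha.2)].
Definition mu_M := [fset x in PI | (x \in alpha.2) || (th x \notin alpha.1)].
Definition Dm := [fset x in PI | (x \in alpha.1) == (th x \in alpha.2)].
Definition al_m : bipart := (lam_m, mu_m).
Definition al_M : bipart := (lam_M, mu_M).

Lemma ha1 : is_partition alpha.1. Proof. by case: halpha => [[]]. Qed.
Lemma ha2 : is_partition alpha.2. Proof. by case: halpha => [[]]. Qed.
Lemma sa1 : alpha.1 `<=` PI. Proof. by case: halpha => _ []. Qed.
Lemma sa2 : alpha.2 `<=` PI. Proof. by case: halpha => _ []. Qed.

Lemma sep_sub (P : pred box) : [fset x in PI | P x] `<=` PI.
Proof. by apply/fsubsetP => x; rewrite in_sep => /andP[]. Qed.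

Lemma notpi_sep (P : pred box) x : x \notin PI -> (x \in [fset y in PI | P y]) = false.
Proof. by rewrite in_sep => /negbTE ->. Qed.

Lemma good_m : Good al_m.
Proof.
split; first split; first split.
- apply: (part_f (f := (fun l u => l && ~~ u))) ha1 ha2 _; first exact: mono_and.
- apply: (part_f (f := (fun l u => l && ~~ u))) ha2 ha1 _; first exact: mono_and.
- by split; apply: sep_sub.
move=> x xp /=; rewrite !in_sep theta_pi // thetaK // xp /=.
by bcase.
Qed.

Lemma good_M : Good al_M.
Proof.
split; first split; first split.
- apply: (part_f (f := (fun l u => l || ~~ u))) ha1 ha2 _; first exact: mono_or.
- apply: (part_f (f := (fun l u => l || ~~ u))) ha2 ha1 _; first exact: mono_or.
- by split; apply: sep_sub.
move=> x xp /=; rewrite !in_sep theta_pi // thetaK // xp /=.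
by bcase.
Qed.

Lemma Good_sub b : Good b -> b.1 `<=` PI /\ b.2 `<=` PI.
Proof. by case=> [[_ []]]. Qed.

Lemma Good_part b : Good b -> is_partition b.1 /\ is_partition b.2.
Proof. by case=> [[[]]]. Qed.

Lemma good_bsub b : Good b -> bsubset al_m b && bsubset b al_M.
Proof.
move=> hb; have [sb1 sb2] := Good_sub hb; case: hb => _ hg.
rewrite /bsubset /=; apply/andP; split; apply/andP; split; apply/fsubsetP.
- move=> x; rewrite in_sep => /andP[xp]; move: (hg x xp); by bcase.
- move=> y; rewrite in_sep => /andP[yp]; move: (hg _ (theta_pi yp)).
  rewrite thetaK //; by bcase.
- move=> x xb; have xp := fsubsetP sb1 _ xb; rewrite in_sep xp /=.
  move: (hg x xp) xb; by bcase.
- move=> y yb; have yp := fsubsetP sb2 _ yb; rewrite in_sep yp /=.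
  move: (hg _ (theta_pi yp)) yb; rewrite thetaK //; by bcase.
Qed.


Lemma notpi_sub (A : {fset box}) x : A `<=` PI -> x \notin PI -> (x \in A) = false.
Proof. by move=> sA xn; apply/negbTE; apply: contra xn; apply: (fsubsetP sA). Qed.

Lemma char_m b : Good b -> (b = al_m <-> b.1 `&` theta_set n m b.2 = fset0).
Proof.
move=> hb; have [sb1 sb2] := Good_sub hb; case: (hb) => _ hg.
split => [->|h].
  apply/fsetP => x; rewrite in_fsetI in_fset0 /=.
  case: (boolP (x \in PI)) => xp; last by rewrite notpi_sep.
  rewrite mem_theta_set ?sep_sub // !in_sep theta_pi // thetaK // xp /=.
  by bcase.
have hx x : x \in PI -> ~~ ((x \in b.1) && (th x \in b.2)).
  move=> xp; apply/negP => hh.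
  have : x \in b.1 `&` theta_set n m b.2 by rewrite in_fsetI mem_theta_set.
  by rewrite h in_fset0.
case: b hb sb1 sb2 hg h hx => b1 b2 /= hb sb1 sb2 hg h hx.
congr pair; apply/fsetP.
  move=> x; case: (boolP (x \in PI)) => xp; last by rewrite notpi_sep // notpi_sub.
  by rewrite in_sep xp /=; move: (hg x xp) (hx x xp); bcase.
move=> y; case: (boolP (y \in PI)) => yp; last by rewrite notpi_sep // notpi_sub.
rewrite in_sep yp /= -{1}(thetaK yp).
by move: (hg _ (theta_pi yp)) (hx _ (theta_pi yp)); rewrite thetaK //; bcase.
Qed.

Lemma char_M b : Good b -> (b = al_M <-> b.1 `|` theta_set n m b.2 = PI).
Proof.
move=> hb; have [sb1 sb2] := Good_sub hb; case: (hb) => _ hg.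
split => [->|h].
  apply/fsetP => x; rewrite in_fsetU /=.
  case: (boolP (x \in PI)) => xp; last first.
    by rewrite notpi_sep // notpi_sub // theta_set_sub // sep_sub.
  rewrite mem_theta_set ?sep_sub // !in_sep theta_pi // thetaK // xp /=.
  by bcase.
have hx x : x \in PI -> (x \in b.1) || (th x \in b.2).
  by move=> xp; have := xp; rewrite -{1}h in_fsetU mem_theta_set.
case: b hb sb1 sb2 hg h hx => b1 b2 /= hb sb1 sb2 hg h hx.
congr pair; apply/fsetP.
  move=> x; case: (boolP (x \in PI)) => xp; last by rewrite notpi_sep // notpi_sub.
  by rewrite in_sep xp /=; move: (hg x xp) (hx x xp); bcase.
move=> y; case: (boolP (y \in PI)) => yp; last by rewrite notpi_sep // notpi_sub.
rewrite in_sep yp /= -{1}(thetaK yp).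
by move: (hg _ (theta_pi yp)) (hx _ (theta_pi yp)); rewrite thetaK //; bcase.
Qed.

Lemma Dm_sub : Dm `<=` PI. Proof. exact: sep_sub. Qed.

Lemma lamMD : lam_M `\` lam_m = Dm.
Proof.
apply/fsetP => x; rewrite in_fsetD.
case: (boolP (x \in PI)) => xp; last by rewrite !notpi_sep.
by rewrite !in_sep xp /=; bcase.
Qed.

Lemma muMD : mu_M `\` mu_m = theta_set n m Dm.
Proof.
apply/fsetP => y; rewrite in_fsetD.
case: (boolP (y \in PI)) => yp; last by rewrite !notpi_sep // notpi_sub // theta_set_sub // Dm_sub.
rewrite mem_theta_set ?Dm_sub // !in_sep theta_pi // thetaK // yp /=.
by bcase.
Qed.


Definition cseq : seq {fset box} := enum_fset (compset Dm).
Definition rr := size cseq.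
Definition nu (i : 'I_rr) : {fset box} := nth fset0 cseq i.
Definition tau (i : 'I_rr) : {fset box} := theta_set n m (nu i).
Definition betaA (A : {set 'I_rr}) : bipart := bunion al_m (famU nu A, famU tau A).

Lemma nu_comp i : is_component Dm (nu i).
Proof. by apply/compset_spec; rewrite /nu; apply: mem_nth. Qed.

Lemma comp_nu C : is_component Dm C -> exists i, C = nu i.
Proof.
move/compset_spec => hC; have hi : (index C cseq < rr)%N by rewrite index_mem.
by exists (Ordinal hi); rewrite /nu nth_index.
Qed.

Lemma nu_inj : injective nu.
Proof.
move=> i j /eqP; rewrite /nu nth_uniq ?fset_uniq //; first by move/eqP/val_inj.
Qed.

Lemma nu_sub i : nu i `<=` PI.
Proof. by case: (nu_comp i) => s _ _ _; apply: fsubset_trans s Dm_sub. Qed.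

Lemma tau_comp_iff C : is_component (theta_set n m Dm) C <-> exists i, C = tau i.
Proof.
have sD := theta_set_sub Dm_sub.
split => [hC|[i ->]]; last exact: theta_component Dm_sub (nu_comp i).
have sC : C `<=` PI by case: hC => s _ _ _; apply: fsubset_trans s sD.
have := theta_component sD hC; rewrite theta_setK ?Dm_sub // => /comp_nu [i hi].
by exists i; rewrite /tau -hi theta_setK.
Qed.

Lemma tau_comp i : is_component (theta_set n m Dm) (tau i).
Proof. by apply/tau_comp_iff; exists i. Qed.

Lemma tau_inj : injective tau.
Proof.
move=> i j e; apply: nu_inj.
by have := congr1 (theta_set n m) e; rewrite /tau !theta_setK // nu_sub.
Qed.

Lemma famUP r (F : 'I_r -> {fset box}) (A : {set 'I_r}) x :
  reflect (exists2 i, i \in A & x \in F i) (x \in famU F A).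
Proof.
rewrite /famU; apply: (iffP (@bigfcupP _ _ (enum A) x F xpredT)) => [[i /andP[iA _] xi]|[i iA xi]].
  by exists i; rewrite // -mem_enum.
by exists i; rewrite // mem_enum iA.
Qed.

Lemma famU_closed r S (F : 'I_r -> {fset box}) (A : {set 'I_r}) :
  (forall i, is_component S (F i)) ->
  forall x y, x \in famU F A -> y \in S -> adj x y -> y \in famU F A.
Proof.
move=> hF x y /famUP[i iA xi] yS xy; apply/famUP; exists i => //.
by case: (hF i) => _ _ _ hcl; apply: hcl xy.
Qed.

Lemma famU_sub r S (F : 'I_r -> {fset box}) (A : {set 'I_r}) :
  (forall i, F i `<=` S) -> famU F A `<=` S.
Proof. by move=> hF; apply/fsubsetP => x /famUP[i _ xi]; apply: (fsubsetP (hF i)). Qed.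

Lemma famU_tau A : famU tau A = theta_set n m (famU nu A).
Proof. by rewrite /famU theta_bigcup. Qed.

Lemma Dm_lamM : Dm `<=` lam_M.
Proof. by apply/fsubsetP => x; rewrite -lamMD in_fsetD => /andP[]. Qed.

Lemma Dm_muM : theta_set n m Dm `<=` mu_M.
Proof. by apply/fsubsetP => x; rewrite -muMD in_fsetD => /andP[]. Qed.

Lemma good_A A : Good (betaA A).
Proof.
have sO : famU nu A `<=` Dm by apply: famU_sub => i; case: (nu_comp i).
have sO' : famU tau A `<=` theta_set n m Dm by apply: famU_sub => i; case: (tau_comp i).
have [pm1 pm2] := Good_part good_m.
have [pM1 pM2] := Good_part good_M.
split; first split; first split.
- apply: (part_U (LM := lam_M) (D := Dm)) => //.
  + move=> x xM; case: (boolP (x \in lam_m)) => //= xm.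
    by rewrite -lamMD in_fsetD xm xM.
  + exact: fsubset_trans sO Dm_lamM.
  + exact: famU_closed nu_comp.
- apply: (part_U (LM := mu_M) (D := theta_set n m Dm)) => //.
  + move=> x xM; case: (boolP (x \in mu_m)) => //= xm.
    by rewrite -muMD in_fsetD xm xM.
  + exact: fsubset_trans sO' Dm_muM.
  + exact: famU_closed tau_comp.
- split; rewrite /= fsubUset sep_sub /=.
    exact: fsubset_trans sO Dm_sub.
  exact: fsubset_trans sO' (theta_set_sub Dm_sub).
move=> x xp /=; rewrite famU_tau !in_fsetU mem_theta_set ?theta_pi //; last first.
  exact: fsubset_trans sO Dm_sub.
rewrite !in_sep theta_pi // thetaK // xp /=.
case: (boolP (x \in famU nu A)) => xO.
  have := fsubsetP sO x xO; rewrite in_sep => /andP[_]; by bcase.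
by bcase.
Qed.


Lemma pi_th y : y \in PI -> exists2 x, x \in PI & y = th x.
Proof. by move=> yp; exists (th y); [apply: theta_pi | rewrite thetaK]. Qed.

Lemma good_exA b : Good b -> exists A, b = betaA A.
Proof.
move=> hb; have [sb1 sb2] := Good_sub hb; have [hb1 hb2] := Good_part hb.
case: (hb) => _ hg.
pose Ob := [fset x in PI | (x \in b.1) && (th x \in b.2)].
have step : forall a c, a \in Ob -> c \in Dm -> adj a c -> c \in Ob.
  move=> a c; rewrite !in_sep => /andP[ap /andP[ab1 ab2]] /andP[cp ceq] ac.
  suff hc : (c \in b.1) || (th c \in b.2).
    by rewrite cp /=; move: (hg c cp) ceq hc; bcase.
  have cp' := cp; rewrite in_piE /in_pi in cp'.
  case: a ac ap ab1 ab2 => i j; case: c cp ceq cp' => i' j' cp ceq cp'.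
  rewrite /adj /= => /orP[/andP[/eqP ei /orP[/eqP ej|/eqP ej]]|/andP[/eqP ej /orP[/eqP ei|/eqP ei]]] ap ab1 ab2;
    subst => /=; rewrite /= in cp'.
  - by apply/orP; left; apply: (L_left hb1 ab1); lia.
  - by apply/orP; right; apply: (M_right hb2 ap ab2); lia.
  - by apply/orP; left; apply: (L_up hb1 ab1); lia.
  - by apply/orP; right; apply: (M_down hb2 ap ab2); lia.
pose A := [set i | nu i `<=` Ob].
have eO : famU nu A = Ob.
  apply/fsetP => x; apply/famUP/idP => [[i iA xi]|xO].
    by move: iA; rewrite inE => /fsubsetP; apply.
  have xD : x \in Dm.
    move: xO; rewrite !in_sep => /andP[xp hx]; rewrite xp /=.
    by move: (hg x xp) hx; bcase.
  have [i ei] := comp_nu (comp_is_component xD).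
  exists i; last by rewrite -ei in_comp xD; apply/asboolP; exact: reach0.
  rewrite inE -ei; apply/fsubsetP => y; rewrite in_comp => /andP[_ /asboolP hr].
  by apply: (reach_induct (Q := fun y => y \in Ob) hr xO) => a c ha hc hac; exact: step ha hc hac.
exists A; rewrite /betaA /bunion famU_tau eO /=.
rewrite [LHS]surjective_pairing; congr pair; apply/fsetP.
  move=> x; rewrite in_fsetU; case: (boolP (x \in PI)) => xp; last first.
    by rewrite !notpi_sep // notpi_sub.
  by rewrite !in_sep xp /=; move: (hg x xp); bcase.
move=> y; rewrite in_fsetU; case: (boolP (y \in PI)) => yp; last first.
  by rewrite notpi_sep // (notpi_sub sb2) // (notpi_sub (theta_set_sub (sep_sub _))).
have [x xp ey] := pi_th yp; rewrite ey mem_theta_set ?sep_sub ?theta_pi //.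
by rewrite !in_sep theta_pi // thetaK // xp /=; move: (hg x xp); bcase.
Qed.

Lemma famU_nu_sub A : famU nu A `<=` Dm.
Proof. by apply: famU_sub => i; case: (nu_comp i). Qed.

Lemma idx_sub A B i : famU nu A = famU nu B -> i \in A -> i \in B.
Proof.
move=> e iA; case: (nu_comp i) => _ ne _ _; have [x xi] := fset0Pn _ ne.
have : x \in famU nu B by rewrite -e; apply/famUP; exists i.
case/famUP => j jB xj.
by have /nu_inj -> := comp_eq (nu_comp i) (nu_comp j) xi xj.
Qed.

Lemma famU_eq A B : lam_m `|` famU nu A = lam_m `|` famU nu B -> famU nu A `<=` famU nu B.
Proof.
move=> e; apply/fsubsetP => x xA.
have : x \in lam_m `|` famU nu B by rewrite -e in_fsetU xA orbT.
rewrite in_fsetU => /orP[xm|//]; exfalso.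
have := fsubsetP (famU_nu_sub A) x xA; move: xm; rewrite !in_sep.
by bcase; rewrite ?andbF.
Qed.

Lemma betaA_inj : injective betaA.
Proof.
move=> A B e; have e1 := congr1 fst e; rewrite /= in e1.
have eAB : famU nu A = famU nu B.
  by apply/eqP; rewrite eqEfsubset famU_eq // famU_eq.
by apply/setP => i; apply/idP/idP; apply: idx_sub.
Qed.


Lemma main_sec :
  let p0 : complex R := (n%:R + k^-1 * m%:R)%R in
  let E := fun beta : bipart => is_bipartition beta /\ Eequiv k p0 alpha beta in
  (forall beta, E beta -> in_Pnm n m beta) /\
  exists alpha_m alpha_M : bipart,
    [/\ E alpha_m /\ E alpha_M,
        (forall beta, E beta -> bsubset alpha_m beta && bsubset beta alpha_M),
        (forall beta, E beta ->
           (beta = alpha_m <-> beta.1 `&` theta_set n m beta.2 = fset0)),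
        (forall beta, E beta ->
           (beta = alpha_M <-> beta.1 `|` theta_set n m beta.2 = pi_nm n m)) &
    exists (r : nat) (nu tau : 'I_r -> boxes),
      [/\ (forall C, is_component (alpha_M.1 `\` alpha_m.1) C <-> exists i, C = nu i),
          (forall C, is_component (alpha_M.2 `\` alpha_m.2) C <-> exists i, C = tau i),
          injective nu /\ injective tau,
          (forall i, [/\ nu i `<=` pi_nm n m, tau i `<=` pi_nm n m &
                         theta_set n m (nu i) = tau i]) &
          [/\ (forall A : {set 'I_r}, E (bunion alpha_m (famU nu A, famU tau A))),
              (forall beta, E beta -> exists A : {set 'I_r},
                  beta = bunion alpha_m (famU nu A, famU tau A)),
              (forall A B : {set 'I_r},
                  bunion alpha_m (famU nu A, famU tau A) =
                  bunion alpha_m (famU nu B, famU tau B) -> A = B) &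
              exists s : seq bipart,
                [/\ uniq s, size s = (2 ^ r)%N & forall beta, E beta <-> beta \in s]]]].
Proof.
move=> p0 E.
have EG : forall b, E b <-> Good b := E_Good.
split; first by move=> b /EG [].
exists al_m, al_M; split.
- by split; apply/EG; [exact: good_m | exact: good_M].
- by move=> b /EG; exact: good_bsub.
- by move=> b /EG; exact: char_m.
- by move=> b /EG; exact: char_M.
exists rr, nu, tau; split.
- move=> C; rewrite /= lamMD; split; first exact: comp_nu.
  by case=> i ->; exact: nu_comp.
- by move=> C; rewrite /= muMD; exact: tau_comp_iff.
- by split; [exact: nu_inj | exact: tau_inj].
- by move=> i; split; [exact: nu_sub | exact: theta_set_sub (nu_sub i) | by []].
split.
- by move=> A; apply/EG; exact: good_A.
- by move=> b /EG /good_exA [A ->]; exists A.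
- by move=> A B; exact: betaA_inj.
exists [seq betaA A | A <- enum (powerset [set: 'I_rr])]; split.
- by rewrite map_inj_uniq ?enum_uniq //; exact: betaA_inj.
- by rewrite size_map -cardE card_powerset cardsT card_ord.
move=> b; split.
  move/EG/good_exA => [A ->]; apply: map_f.
  by rewrite mem_enum powersetE subsetT.
by case/mapP => A _ ->; apply/EG; exact: good_A.
Qed.

End Main.

Unset Implicit Arguments.
Theorem mainTheorem3 (R : realType) (k : complex R)
  (hk : forall q : rat, k != ratr q) (n m : nat) (hn : (0 < n)%N) (hm : (0 < m)%N)
  (alpha : bipart) (halpha : in_Pnm n m alpha) :
  let p0 : complex R := (n%:R + k^-1 * m%:R)%R in
  let E := fun beta : bipart => is_bipartition beta /\ Eequiv k p0 alpha beta in
  (* 1) *)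
  (forall beta, E beta -> in_Pnm n m beta) /\
  exists alpha_m alpha_M : bipart,
    (* 2) *)
    [/\ E alpha_m /\ E alpha_M,
        (forall beta, E beta -> bsubset alpha_m beta && bsubset beta alpha_M),
        (forall beta, E beta ->
           (beta = alpha_m <-> beta.1 `&` theta_set n m beta.2 = fset0)),
        (forall beta, E beta ->
           (beta = alpha_M <-> beta.1 `|` theta_set n m beta.2 = pi_nm n m)) &
    (* 3) and 4) *)
    exists (r : nat) (nu tau : 'I_r -> boxes),
      [/\ (forall C, is_component (alpha_M.1 `\` alpha_m.1) C <-> exists i, C = nu i),
          (forall C, is_component (alpha_M.2 `\` alpha_m.2) C <-> exists i, C = tau i),
          injective nu /\ injective tau,
          (forall i, [/\ nu i `<=` pi_nm n m, tau i `<=` pi_nm n m &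
                         theta_set n m (nu i) = tau i]) &
          [/\ (forall A : {set 'I_r}, E (bunion alpha_m (famU nu A, famU tau A))),
              (forall beta, E beta -> exists A : {set 'I_r},
                  beta = bunion alpha_m (famU nu A, famU tau A)),
              (forall A B : {set 'I_r},
                  bunion alpha_m (famU nu A, famU tau A) =
                  bunion alpha_m (famU nu B, famU tau B) -> A = B) &
              exists s : seq bipart,
                [/\ uniq s, size s = (2 ^ r)%N & forall beta, E beta <-> beta \in s]]]].
Proof. exact: main_sec. Qed.
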